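(* Let $P$ and $Q$ be distinct planes in $\mathbb{H}^4$ intersecting in a single point. Then $H_PH_Q$ is a type-II orientation preserving elliptic isometry.
   Context: A plane is a $2$-dimensional totally geodesic subspace of $\mathbb{H}^4$. For a plane $P$, the half-turn $H_P$ is the composition of reflections in two orthogonal hyperplanes intersecting in $P$. An elliptic isometry of $\mathbb{H}^4$ is of type II if it fixes a unique point of $\mathbb{H}^4$. *)

(* Defs.v *)
(* Hyperboloid model of H^4 inside Minkowski space R^{1,4}. *)
From HB Require Import structures.
From mathcomp Require Import all_boot all_order all_algebra.
From mathcomp Require Import reals.
Set Implicit Arguments. Unset Strict Implicit. Unset Printing Implicit Defensive.
Import Order.TTheory GRing.Theory Num.Theory.
Local Open Scope ring_scope.

Section Hyp.
Variable R : realType.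

Definition Jm : 'M[R]_5 := diag_mx (\row_(i < 5) (if i == ord0 then -1 else 1)).
Definition lform (x y : 'cV[R]_5) : R := (x^T *m Jm *m y) ord0 ord0.

Definition hpoint (x : 'cV[R]_5) : Prop := lform x x = -1 /\ 0 < x ord0 ord0.

(* isometries of H^4 = positive Lorentz matrices, acting by x |-> A *m x *)
Definition isometry (A : 'M[R]_5) : Prop :=
  A^T *m Jm *m A = Jm /\ (forall x, hpoint x -> hpoint (A *m x)).

Definition orientation_preserving (A : 'M[R]_5) : Prop := \det A = 1.

Definition fixes_point (A : 'M[R]_5) (x : 'cV[R]_5) : Prop := hpoint x /\ A *m x = x.

Definition elliptic (A : 'M[R]_5) : Prop := isometry A /\ exists x, fixes_point A x.

Definition elliptic_typeII (A : 'M[R]_5) : Prop :=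
  isometry A /\ exists! x, fixes_point A x.

(* a plane: 2-dimensional totally geodesic subspace of H^4, i.e. the
   (nonempty) intersection of H^4 with a 3-dimensional linear subspace *)
Definition plane (P : 'cV[R]_5 -> Prop) : Prop :=
  exists W : 'M[R]_(3, 5), \rank W = 3%N /\
    (forall x, P x <-> hpoint x /\ (x^T <= W)%MS) /\ (exists x, P x).

(* hyperplane with spacelike normal v: {x in H^4 | <x,v> = 0};
   reflection in it: x |-> x - 2 <x,v>/<v,v> v *)
Definition refl (v : 'cV[R]_5) : 'M[R]_5 :=
  1%:M - (2 / lform v v) *: (v *m (v^T *m Jm)).

(* H_P : composition of the reflections in two orthogonal hyperplanes
   (normals v, w spacelike and Lorentz-orthogonal) whose intersection is P *)
Definition half_turn (P : 'cV[R]_5 -> Prop) (H : 'M[R]_5) : Prop :=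
  exists v w : 'cV[R]_5,
    [/\ 0 < lform v v, 0 < lform w w, lform v w = 0,
        (forall x, P x <-> hpoint x /\ lform x v = 0 /\ lform x w = 0)
      & H = refl v *m refl w].

End Hyp.

(* Main.v *)
Require Import Defs.
From HB Require Import structures.
From mathcomp Require Import all_boot all_order all_algebra.
From mathcomp Require Import reals ring lra.
Set Implicit Arguments. Unset Strict Implicit. Unset Printing Implicit Defensive.
Import Order.TTheory GRing.Theory Num.Theory.
Local Open Scope ring_scope.

Section S.
Variable R : realType.
Notation V := 'cV[R]_5.
Definition c0 : 'I_5 := ord0.
Definition c1 : 'I_5 := Ordinal (isT : (1 < 5)%N).
Definition c2 : 'I_5 := Ordinal (isT : (2 < 5)%N).
Definition c3 : 'I_5 := Ordinal (isT : (3 < 5)%N).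
Definition c4 : 'I_5 := Ordinal (isT : (4 < 5)%N).

Lemma sum5 (T : nmodType) (f : 'I_5 -> T) : \sum_(i < 5) f i = f c0 + f c1 + f c2 + f c3 + f c4.
Proof.
rewrite !big_ord_recr big_ord0 /=; rewrite add0r; repeat congr (_ + _); congr f; exact: val_inj.
Qed.

Lemma ord5 (i : 'I_5) : i = c0 \/ i = c1 \/ i = c2 \/ i = c3 \/ i = c4.
Proof.
case: i => [[|[|[|[|[|k]]]]] Hi] //.
- by left; apply: val_inj.
- by right; left; apply: val_inj.
- by do 2 right; left; apply: val_inj.
- by do 3 right; left; apply: val_inj.
- by do 4 right; apply: val_inj.
Qed.

Lemma lformE (x y : V) : lform x y =
  - x c0 0 * y c0 0 + x c1 0 * y c1 0 + x c2 0 * y c2 0 + x c3 0 * y c3 0 + x c4 0 * y c4 0.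
Proof.
rewrite /lform /Jm !mxE sum5 !mxE !sum5 !mxE /=.
ring.
Qed.

Lemma lformC (x y : V) : lform x y = lform y x.
Proof. rewrite !lformE; ring. Qed.
Lemma lformDl (x y z : V) : lform (x + y) z = lform x z + lform y z.
Proof. rewrite !lformE !mxE; ring. Qed.
Lemma lformDr (x y z : V) : lform z (x + y) = lform z x + lform z y.
Proof. rewrite !lformE !mxE; ring. Qed.
Lemma lformBl (x y z : V) : lform (x - y) z = lform x z - lform y z.
Proof. rewrite !lformE !mxE; ring. Qed.
Lemma lformBr (x y z : V) : lform z (x - y) = lform z x - lform z y.
Proof. rewrite !lformE !mxE; ring. Qed.
Lemma lformZl a (x z : V) : lform (a *: x) z = a * lform x z.
Proof. rewrite !lformE !mxE; ring. Qed.
Lemma lformZr a (x z : V) : lform z (a *: x) = a * lform z x.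
Proof. rewrite !lformE !mxE; ring. Qed.
Lemma lform0l (z : V) : lform 0 z = 0.
Proof. rewrite !lformE !mxE; ring. Qed.
Lemma lform0r (z : V) : lform z 0 = 0.
Proof. rewrite !lformE !mxE; ring. Qed.

Lemma entry_delta (B : 'M[R]_5) i j :
  ((delta_mx i (0:'I_1))^T *m B *m delta_mx j (0:'I_1)) 0 0 = B i j.
Proof. by rewrite trmx_delta -rowE -colE !mxE. Qed.

Lemma lform_mul (A : 'M[R]_5) x y :
  lform (A *m x) (A *m y) = (x^T *m (A^T *m Jm R *m A) *m y) 0 0.
Proof. by rewrite /lform trmx_mul !mulmxA. Qed.

Lemma isom_of_lform (A : 'M[R]_5) :
  (forall x y, lform (A *m x) (A *m y) = lform x y) -> A^T *m Jm R *m A = Jm R.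
Proof.
move=> H; apply/matrixP => i j.
by rewrite -entry_delta -lform_mul H /lform entry_delta.
Qed.

Lemma refl_apply (v x : V) : Defs.refl v *m x = x - (2 / lform v v * lform v x) *: v.
Proof.
rewrite /Defs.refl mulmxBl mul1mx -scalemxAl -!mulmxA.
rewrite [v^T *m (Jm R *m x)]mx11_scalar mul_mx_scalar scalerA /lform mulmxA.
by [].
Qed.

Lemma refl_lform (v x y : V) : 0 < lform v v ->
  lform (Defs.refl v *m x) (Defs.refl v *m y) = lform x y.
Proof.
move=> hv; rewrite !refl_apply !(lformBl, lformBr, lformZl, lformZr).
rewrite [lform x v]lformC ?[lform y v]lformC [lform v y]lformC ?[lform y v]lformC.
move: (lform v x) (lform v y) (lform y v) => a b c. field; lra.
Qed.

Lemma CS4 (a1 a2 a3 a4 b1 b2 b3 b4 : R) :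
  (a1*b1+a2*b2+a3*b3+a4*b4)^+2 <= (a1^+2+a2^+2+a3^+2+a4^+2)*(b1^+2+b2^+2+b3^+2+b4^+2).
Proof.
rewrite -subr_ge0.
have -> : (a1^+2+a2^+2+a3^+2+a4^+2)*(b1^+2+b2^+2+b3^+2+b4^+2) - (a1*b1+a2*b2+a3*b3+a4*b4)^+2
  = (a1*b2-a2*b1)^+2 + (a1*b3-a3*b1)^+2 + (a1*b4-a4*b1)^+2 + (a2*b3-a3*b2)^+2
    + (a2*b4-a4*b2)^+2 + (a3*b4-a4*b3)^+2 by ring.
by rewrite !addr_ge0 // sqr_ge0.
Qed.

Lemma sheet (x y : V) : hpoint x -> lform y y = -1 -> lform x y < 0 -> 0 < y c0 0.
Proof.
case=> hx hx0 hy hxy; move: hx hy hxy; rewrite !lformE.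
have := CS4 (x c1 0) (x c2 0) (x c3 0) (x c4 0) (y c1 0) (y c2 0) (y c3 0) (y c4 0).
move: hx0; rewrite /c0.
move: (x ord0 0) (x c1 0) (x c2 0) (x c3 0) (x c4 0) (y ord0 0) (y c1 0) (y c2 0) (y c3 0) (y c4 0).
move=> x0 x1 x2 x3 x4 y0 y1 y2 y3 y4 hx0 cs hx hy hxy.
rewrite ltNge; apply/negP => hy0.
set S := x1*y1+x2*y2+x3*y3+x4*y4.
have h1 : S < x0 * y0 by rewrite /S; lra.
have h2 : x0 * y0 <= 0 by nra.
have h3 : (x0*y0)^+2 < S^+2 by nra.
have h4 : x1^+2+x2^+2+x3^+2+x4^+2 = x0^+2 - 1 by lra.
have h5 : y1^+2+y2^+2+y3^+2+y4^+2 = y0^+2 - 1 by lra.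
rewrite h4 h5 -/S in cs.
nra.
Qed.

Lemma hpoint0 (x : V) : hpoint x -> 0 < x c0 0.
Proof. by case. Qed.

Lemma refl_hpoint (v x : V) : 0 < lform v v -> hpoint x -> hpoint (Defs.refl v *m x).
Proof.
move=> hv hx; have hxx : lform (Defs.refl v *m x) (Defs.refl v *m x) = -1.
  by rewrite refl_lform //; case: hx.
split => //; apply: (sheet hx hxx).
rewrite refl_apply lformBr lformZr; case: hx => -> _.
rewrite [lform x v]lformC.
have : 0 <= 2 / lform v v * (lform v x * lform v x).
  by apply: mulr_ge0; [apply: divr_ge0; lra | nra].
rewrite mulrA; lra.
Qed.

Lemma refl_isom (v : V) : 0 < lform v v -> Defs.isometry (Defs.refl v).
Proof.
move=> hv; split; last by move=> x; apply: refl_hpoint.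
by apply: isom_of_lform => x y; rewrite refl_lform.
Qed.

Lemma isom_mul (A B : 'M[R]_5) : Defs.isometry A -> Defs.isometry B -> Defs.isometry (A *m B).
Proof.
move=> [hA pA] [hB pB]; split; last by move=> x hx; rewrite -mulmxA; apply/pA/pB.
rewrite trmx_mul -!mulmxA (mulmxA A^T) (mulmxA (A^T *m _)) hA. by rewrite !mulmxA.
Qed.

Lemma det_rank1 (u : V) (r : 'rV[R]_5) : \det (1%:M + u *m r) = 1 + (r *m u) 0 0.
Proof.
have e1 : block_mx 1%:M (- u) r 1%:M =
   block_mx 1%:M 0 r 1%:M *m block_mx 1%:M (-u) 0 (1%:M + r *m u) :> 'M[R]_(5 + 1).
  rewrite mulmx_block !mul1mx !mulmx1 !mul0mx !addr0 ?add0r.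
  by rewrite mulmxN addrC addrK.
have e2 : block_mx 1%:M (- u) r 1%:M =
   block_mx (1%:M + u *m r) (-u) 0 1%:M *m block_mx 1%:M 0 r 1%:M :> 'M[R]_(5 + 1).
  rewrite mulmx_block !mul1mx !mulmx1 !mul0mx ?mulmx0 ?addr0 ?add0r.
  by rewrite mulNmx addrK.
have := congr1 determinant e1; rewrite e2 !det_mulmx !det_lblock !det_ublock.
rewrite !det1 !mul1r !mulr1 det_mx11 !mxE /= => ->.
by [].
Qed.

Lemma det_refl (v : V) : 0 < lform v v -> \det (Defs.refl v) = -1.
Proof.
move=> hv; rewrite /Defs.refl -scaleNr scalemxAl det_rank1 -scalemxAr mxE. rewrite -/(lform v v).
field; lra.
Qed.

Section HT.
Variables (v w : V).
Hypotheses (hv : 0 < lform v v) (hw : 0 < lform w w) (hvw : lform v w = 0).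
Let H := Defs.refl v *m Defs.refl w.

Lemma ht_apply (x : V) : H *m x =
  x - (2 / lform v v * lform v x) *: v - (2 / lform w w * lform w x) *: w.
Proof.
rewrite /H -mulmxA !refl_apply lformBr lformZr hvw mulr0 subr0.
by rewrite addrAC.
Qed.

Lemma ht_invol (x : V) : H *m (H *m x) = x.
Proof.
rewrite [H *m (H *m x)]ht_apply ht_apply.
rewrite !(lformBr, lformZr) hvw [lform w v]lformC hvw !mulr0 !subr0.
have -> : 2 / lform v v * (lform v x - 2 / lform v v * lform v x * lform v v)
  = - (2 / lform v v * lform v x) by field; apply: lt0r_neq0.
have -> : 2 / lform w w * (lform w x - 2 / lform w w * lform w x * lform w w)
  = - (2 / lform w w * lform w x) by field; apply: lt0r_neq0.
rewrite !scaleNr !opprK.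
by rewrite addrAC subrK subrK.
Qed.

Lemma ht_fix (x : V) : H *m x = x -> lform x v = 0 /\ lform x w = 0.
Proof.
rewrite ht_apply => e.
have := congr1 (lform v) e; have := congr1 (lform w) e.
rewrite !(lformBr, lformZr) hvw [lform w v]lformC hvw.
rewrite [lform x v]lformC [lform x w]lformC => h1 h2.
have e1 : 2 / lform v v * lform v x * lform v v = 2 * lform v x.
  by field; apply: lt0r_neq0.
have e2 : 2 / lform w w * lform w x * lform w w = 2 * lform w x.
  by field; apply: lt0r_neq0.
split; lra.
Qed.

Lemma ht_fix' (x : V) : lform x v = 0 -> lform x w = 0 -> H *m x = x.
Proof.
move=> h1 h2; rewrite ht_apply [lform v x]lformC [lform w x]lformC h1 h2.
by rewrite !mulr0 !scale0r !subr0.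
Qed.

Lemma ht_anti (x : V) : H *m x = - x ->
  2 *: x = (2 / lform v v * lform v x) *: v + (2 / lform w w * lform w x) *: w.
Proof.
rewrite ht_apply => e.
apply/eqP; rewrite -subr_eq0; apply/eqP.
rewrite -[RHS](subrr (- x)) -{1}e. rewrite scalerDl scale1r.
by rewrite opprK opprD !addrA [RHS]addrC !addrA.
Qed.
End HT.

Lemma vec_eq0 (u : V) : u c0 0 = 0 -> u c1 0 = 0 -> u c2 0 = 0 -> u c3 0 = 0 ->
  u c4 0 = 0 -> u = 0.
Proof.
move=> h0 h1 h2 h3 h4; apply/matrixP => i j; rewrite (ord1 j) mxE.
by case: (ord5 i) => [->|[->|[->|[->|->]]]].
Qed.

Lemma spacelike (p u : V) : hpoint p -> lform u p = 0 -> lform u u <= 0 -> u = 0.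
Proof.
case; rewrite !lformE => hp hp0 hup huu.
have := CS4 (p c1 0) (p c2 0) (p c3 0) (p c4 0) (u c1 0) (u c2 0) (u c3 0) (u c4 0).
move: hp0 hp hup huu; rewrite /c0.
have := vec_eq0 (u:=u); rewrite /c0.
move: (p ord0 0) (p c1 0) (p c2 0) (p c3 0) (p c4 0) (u ord0 0) (u c1 0) (u c2 0) (u c3 0) (u c4 0).
move=> x0 x1 x2 x3 x4 y0 y1 y2 y3 y4 fin hx0 hx hxy hy cs.
have h4 : x1^+2+x2^+2+x3^+2+x4^+2 = x0^+2 - 1 by lra.
have h5 : y1^+2+y2^+2+y3^+2+y4^+2 <= y0^+2 by lra.
set S := x1*y1+x2*y2+x3*y3+x4*y4.
have hS : S = x0 * y0 by rewrite /S; lra.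
rewrite h4 -/S hS in cs.
have hy0 : y0 = 0.
  have : (x0^+2 - 1) * (y1^+2+y2^+2+y3^+2+y4^+2) <= (x0^+2 - 1) * y0^+2.
    apply: ler_wpM2l => //; nra.
  move=> h; apply/eqP; rewrite -sqrf_eq0; apply/eqP; nra.
subst y0.
have hyy : y1^+2+y2^+2+y3^+2+y4^+2 = 0 by nra.
apply: fin => //; nra.
Qed.

Lemma another_point (p u : V) : hpoint p -> lform u p = 0 -> 0 < lform u u ->
  exists q, [/\ hpoint q, q <> p &
     forall z, lform u z = 0 -> lform p z = 0 -> lform q z = 0].
Proof.
move=> hp hup huu.
pose s : R := Num.sqrt (lform u u).
have hs : 0 < s by rewrite sqrtr_gt0.
have hs2 : s ^+ 2 = lform u u by rewrite sqr_sqrtr // ltW.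
pose u1 : V := s^-1 *: u.
have hu1 : lform u1 u1 = 1.
  rewrite /u1 lformZl lformZr -hs2; field; exact: (lt0r_neq0 hs).
have hu1p : lform u1 p = 0 by rewrite /u1 lformZl hup mulr0.
have hu1z : forall z, lform u z = 0 -> lform u1 z = 0.
  by move=> z hz; rewrite /u1 lformZl hz mulr0.
clearbody u1.
pose t : R := Num.sqrt (2 : R).
have ht : 0 < t by rewrite sqrtr_gt0.
have ht2 : t ^+ 2 = 2 by rewrite sqr_sqrtr.
have hpp : lform p p = -1 by case: hp.
have hp0 : 0 < p c0 0 by case: hp.
have key : forall e : R, e ^+ 2 = 1 -> 0 < (t *: p + e *: u1) c0 0 ->
    exists q, [/\ hpoint q, q <> p &
     forall z, lform u z = 0 -> lform p z = 0 -> lform q z = 0].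
  move=> e he hq; exists (t *: p + e *: u1); split.
  - split => //.
        rewrite !(lformDl, lformDr, lformZl, lformZr) hu1 hu1p hpp [lform p u1]lformC hu1p.
    rewrite -[1 in RHS]he; nra.
  - move=> eq; have := congr1 (fun z : V => lform z p) eq.
    rewrite !(lformDl, lformZl) hu1p hpp => h.
    have : t = 1 by lra.
    move=> t1; move: ht2; rewrite t1 expr1n => h2; lra.
  - move=> z hz1 hz2; rewrite !(lformDl, lformZl) hz2 (hu1z _ hz1); ring.
have hq0 : forall e : R, (t *: p + e *: u1) c0 0 = t * p c0 0 + e * u1 c0 0.
  by move=> e; rewrite !mxE.
have [hpos|hneg] := ltrP 0 ((t *: p + 1 *: u1) c0 0).
  by apply: (key 1) => //; rewrite expr1n.
apply: (key (-1)); first by rewrite sqrrN expr1n.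
move: hneg; rewrite !hq0; nra.
Qed.

Lemma perp_exists (f : 'I_5 -> V) (c : 'cV[R]_5) : c != 0 ->
  \sum_j c j 0 *: f j = 0 -> exists2 u : V, u != 0 & forall j, lform u (f j) = 0.
Proof.
move=> c0 hc.
pose F : 'M[R]_5 := \matrix_(i, j) f j i 0.
have hF : F *m c = 0.
  rewrite -hc; apply/matrixP => i k; rewrite (ord1 k) !mxE summxE.
  by apply: eq_bigr => j _; rewrite !mxE mulrC.
have dF : \det F = 0.
  rewrite -det_tr; apply/eqP/det0P; exists c^T; first by rewrite trmx_eq0.
  by rewrite -trmx_mul hF trmx0.
have dJF : \det (Jm R *m F) == 0 by rewrite det_mulmx dF mulr0.
case/det0P: dJF => r r0 hr.
exists r^T; first by rewrite trmx_eq0.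
move=> j; have h := congr1 (fun M : 'rV[R]_5 => M 0 j) hr.
rewrite [RHS]mxE in h; rewrite -h /lform trmxK mulmxA !mxE.
by apply: eq_bigr => k _; rewrite !mxE.
Qed.
End S.


Unset Implicit Arguments.
Theorem lemma6p6 (R : realType) (P Q : 'cV[R]_5 -> Prop) (HP HQ : 'M[R]_5) :
  plane P -> plane Q ->
  ~ (forall x, P x <-> Q x) ->
  (exists! x, P x /\ Q x) ->
  half_turn P HP -> half_turn Q HQ ->
  elliptic_typeII (HP *m HQ) /\ orientation_preserving (HP *m HQ).
Proof.
move=> _ _ _ [p [[Pp Qp] puniq]] [v1 [w1 [hv1 hw1 hvw1 HPc eHP]]]
  [v2 [w2 [hv2 hw2 hvw2 HQc eHQ]]].
have [hp [pv1 pw1]] := (HPc p).1 Pp.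
have [_ [pv2 pw2]] := (HQc p).1 Qp.
have common : forall q, hpoint q -> lform q v1 = 0 -> lform q w1 = 0 ->
    lform q v2 = 0 -> lform q w2 = 0 -> q = p.
  move=> q hq h1 h2 h3 h4; symmetry; apply: puniq; split.
    by apply/HPc.
  by apply/HQc.
split; last first.
  rewrite /orientation_preserving det_mulmx eHP eHQ !det_mulmx !det_refl //.
  by rewrite mulrNN mulr1 mulr1.
split.
  by rewrite eHP eHQ; do !apply: isom_mul; apply: refl_isom.
have fixP : forall x : 'cV[R]_5, lform x v1 = 0 -> lform x w1 = 0 -> HP *m x = x.
  by move=> x; rewrite eHP; apply: ht_fix'.
have fixQ : forall x : 'cV[R]_5, lform x v2 = 0 -> lform x w2 = 0 -> HQ *m x = x.
  by move=> x; rewrite eHQ; apply: ht_fix'.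
exists p; split.
  by split => //; rewrite -mulmxA fixQ // fixP.
move=> y [hy ey].
pose z := HQ *m y.
have invP : forall x : 'cV[R]_5, HP *m (HP *m x) = x by move=> x; rewrite eHP ht_invol.
have invQ : forall x : 'cV[R]_5, HQ *m (HQ *m x) = x by move=> x; rewrite eHQ ht_invol.
have hPz : HP *m z = y by rewrite /z mulmxA.
have hPy : HP *m y = z by rewrite -hPz invP.
pose d := y - z.
have dP : HP *m d = - d by rewrite /d mulmxBr hPy hPz opprB.
have dQ : HQ *m d = - d by rewrite /d mulmxBr invQ opprB.
have e1 := ht_anti hvw1 (x:=d) (etrans (congr1 (fun M => M *m d) (esym eHP)) dP).
have e2 := ht_anti hvw2 (x:=d) (etrans (congr1 (fun M => M *m d) (esym eHQ)) dQ).
move: e1 e2.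
set b1 := 2 / lform v1 v1 * lform v1 d.
set a1 := 2 / lform w1 w1 * lform w1 d.
set b2 := 2 / lform v2 v2 * lform v2 d.
set a2 := 2 / lform w2 w2 * lform w2 d.
move=> e1 e2.
have hba : b1 = 0 /\ a1 = 0.
  suff : (b1 == 0) && (a1 == 0) by case/andP => /eqP -> /eqP ->.
  apply/negPn/negP => nz.
  pose f : 'I_5 -> 'cV[R]_5 := fun j => match val j with
     | 0 => p | 1 => v1 | 2 => w1 | 3 => v2 | _ => w2 end.
  pose c : 'cV[R]_5 := \col_j (match val j with
     | 0 => 0 | 1 => b1 | 2 => a1 | 3 => - b2 | _ => - a2 end).
  have cn0 : c != 0.
    apply/negP => /eqP hc; apply: (negP nz).
    have h1 := congr1 (fun M : 'cV[R]_5 => M c1 0) hc.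
    have h2 := congr1 (fun M : 'cV[R]_5 => M c2 0) hc.
    rewrite /= !mxE /= in h1 h2.
    by rewrite h1 h2 !eqxx.
  have hc : \sum_j c j 0 *: f j = 0.
    rewrite sum5 !mxE /= scale0r add0r !scaleNr. rewrite /f /=.
    by rewrite -addrA -opprD -e1 -e2 subrr.
  have [u u0 hu] := perp_exists cn0 hc.
  have hup : lform u p = 0 := hu c0.
  have hu1 : lform u v1 = 0 := hu c1.
  have hu2 : lform u w1 = 0 := hu c2.
  have hu3 : lform u v2 = 0 := hu c3.
  have hu4 : lform u w2 = 0 := hu c4.
  have huu : 0 < lform u u.
    rewrite ltNge; apply/negP => h; move/eqP: u0; apply.
    exact: spacelike hp hup h.
  have [q [hq qp hqz]] := another_point hp hup huu.
  apply: qp; apply: common => //; apply: hqz => //; rewrite lformC //.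
case: hba => hb ha.
have d2 : 2 *: d = 0 by rewrite e1 hb ha !scale0r addr0.
have d0 : d = 0.
  move/eqP: d2; rewrite scaler_eq0 => /orP[|/eqP //].
  by rewrite pnatr_eq0.
have hyz : y = z by apply/eqP; rewrite -subr_eq0 -/d d0.
have fP : HP *m y = y by rewrite hPy -hyz.
have fQ : HQ *m y = y by rewrite -/z -hyz.
rewrite eHP in fP; rewrite eHQ in fQ.
have [y1 y2] := ht_fix hv1 hw1 hvw1 fP.
have [y3 y4] := ht_fix hv2 hw2 hvw2 fQ.
by symmetry; apply: common.
Qed.
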